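(* Let $X$ be an uncountable Polish space. Then \[ \mathscr{L}_X(\mathsf{r})=\mathscr{L}_X(\mathcal{R})=\Sigma^1_1(X), \] where $\Sigma^1_1(X)$ is the family of all analytic subsets of $X$. Moreover, for every nonempty analytic set $C\subseteq X$ there exists a sequence $y=(y_{\{n,m\}})_{\{n,m\}\in[\omega]^2}\in X^{[\omega]^2}$ such that $C=\Lambda_y(\mathsf{r})=\Lambda_y(\mathcal{R})$.
   Context: $\omega$ denotes the set of nonnegative integers; $[D]^2$ is the family of 2-element subsets of $D$, $[D]^\omega$ the family of infinite subsets, $\mathrm{FIN}$ the finite subsets. The Ramsey map is $\mathsf{r}:[\omega]^\omega\to[[\omega]^2]^\omega$, $\mathsf{r}(D)=[D]^2$. The Ramsey ideal $\mathcal{R}$ on $[\omega]^2$ is the family of all $S\subseteq[\omega]^2$ such that $[D]^2\not\subseteq S$ for every infinite $D\subseteq\omega$. For a sequence $y:[\omega]^2\to X$ in a topological space $X$: $\eta\in X$ is an $\mathsf{r}$-limit point of $y$ if there is an infinite $D\subseteq\omega$ such that for every neighborhood $U$ of $\eta$ there is a finite $K\subseteq\omega$ with $y_{\{n,m\}}\in U$ for all $\{n,m\}\in[D\setminus K]^2$; $\Lambda_y(\mathsf{r})$ is the set of such points. $\eta$ is an $\mathcal{R}$-limit point of $y$ if there is $E\subseteq[\omega]^2$ with $E\notin\mathcal{R}$ such that the subsequence $(y_s)_{s\in E}$ converges to $\eta$ in the ordinary sense (for every neighborhood $U$ of $\eta$, $y_s\in U$ for all but finitely many $s\in E$); $\Lambda_y(\mathcal{R})$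 is the set of such points. $\mathscr{L}_X(\mathsf{r})=\{A\subseteq X:\exists y\in X^{[\omega]^2}\ A=\Lambda_y(\mathsf{r})\}\cup\{\emptyset\}$ and $\mathscr{L}_X(\mathcal{R})=\{A\subseteq X:\exists y\in X^{[\omega]^2}\ A=\Lambda_y(\mathcal{R})\}\cup\{\emptyset\}$. *)

(* Defs.v *)
From HB Require Import structures.
From mathcomp Require Import all_boot all_order all_algebra.
From mathcomp Require Import all_classical all_reals all_analysis.
From Stdlib Require Import Rdefinitions Raxioms.

Set Implicit Arguments.
Unset Strict Implicit.
Unset Printing Implicit Defensive.

Local Open Scope classical_set_scope.

Definition metric_compatible (T : topologicalType) (d : T -> T -> R) : Prop :=
  [/\ (forall x y, Rle 0%R (d x y)),
      (forall x y, d x y = 0%R <-> x = y),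
      (forall x y, d x y = d y x),
      (forall x y z, Rle (d x z) (Rplus (d x y) (d y z))) &
      (forall U : set T, open U <->
         (forall x, U x -> exists e : R, Rlt 0%R e /\
                             [set y | Rlt (d x y) e] `<=` U))].

Definition metric_complete (T : topologicalType) (d : T -> T -> R) : Prop :=
  forall u : nat -> T,
    (forall e : R, Rlt 0%R e ->
       exists N, forall n m, (N <= n)%N -> (N <= m)%N -> Rlt (d (u n) (u m)) e) ->
    exists x : T, u @ \oo --> x.

Definition separable_space (T : topologicalType) : Prop :=
  exists D : set T, countable D /\ closure D = setT.

Definition polish (T : topologicalType) : Prop :=
  separable_space T /\
  exists d : T -> T -> R, metric_compatible d /\ metric_complete d.

(* A subset of X is analytic (Sigma^1_1) if it is the continuous image of a
   Polish space (Kechris, Def. 14.1); the empty set is the image of the empty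
   Polish space. *)
Definition analytic (X : topologicalType) (A : set X) : Prop :=
  exists Y : topologicalType, polish Y /\
    exists f : Y -> X, continuous f /\ f @` setT = A.

(* {n, m} with n < m, represented as the pair (n, m) *)
Definition pair2 := {p : nat * nat | (p.1 < p.2)%N}.

Definition pmin (s : pair2) : nat := (sval s).1.
Definition pmax (s : pair2) : nat := (sval s).2.

Definition sq2 (D : set nat) : set pair2 :=
  [set s | D (pmin s) /\ D (pmax s)].

Definition infinite_set (D : set nat) : Prop := ~ finite_set D.

Definition ramsey_ideal : set (set pair2) :=
  [set S | forall D : set nat, infinite_set D -> ~ (sq2 D `<=` S)].

Definition r_limit (X : topologicalType) (y : pair2 -> X) (eta : X) : Prop :=
  exists D : set nat, infinite_set D /\
    forall U : set X, nbhs eta U ->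
      exists K : set nat, finite_set K /\
        forall s : pair2, sq2 (D `\` K) s -> U (y s).

Definition Lambda_r (X : topologicalType) (y : pair2 -> X) : set X :=
  [set eta | r_limit y eta].

Definition R_limit (X : topologicalType) (y : pair2 -> X) (eta : X) : Prop :=
  exists E : set pair2, ~ ramsey_ideal E /\
    forall U : set X, nbhs eta U -> finite_set [set s | E s /\ ~ U (y s)].

Definition Lambda_R (X : topologicalType) (y : pair2 -> X) : set X :=
  [set eta | R_limit y eta].

Definition L_r (X : topologicalType) : set (set X) :=
  [set A | (exists y : pair2 -> X, A = Lambda_r y) \/ A = set0].

Definition L_R (X : topologicalType) : set (set X) :=
  [set A | (exists y : pair2 -> X, A = Lambda_R y) \/ A = set0].

Definition Sigma11 (X : topologicalType) : set (set X) :=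
  [set A | analytic A].

(* Main.v *)
Require Import Defs.
From Stdlib Require Import Reals Lra Lia.
From HB Require Import structures.
From mathcomp Require Import all_boot all_order all_algebra.
From mathcomp Require Import all_classical all_reals all_analysis.
From mathcomp Require Import zify finmap.

Set Implicit Arguments.
Unset Strict Implicit.
Unset Printing Implicit Defensive.
Local Open Scope classical_set_scope.
Local Open Scope R_scope.

Section Metric.
Variables (T : topologicalType) (d : T -> T -> R).
Hypothesis hd : metric_compatible d.

Lemma mc_nonneg x y : 0 <= d x y. Proof. by case: hd. Qed.
Lemma mc_zero x y : d x y = 0 <-> x = y. Proof. by case: hd. Qed.
Lemma mc_sym x y : d x y = d y x. Proof. by case: hd. Qed.
Lemma mc_tri x y z : d x z <= d x y + d y z. Proof. by case: hd. Qed.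
Lemma mc_open (U : set T) : open U <->
         (forall x, U x -> exists e : R, 0 < e /\ [set y | d x y < e] `<=` U).
Proof. by case: hd. Qed.
Lemma mc_refl x : d x x = 0. Proof. by apply/mc_zero. Qed.

Lemma ball_open x e : open [set z | d x z < e].
Proof.
apply/mc_open => z /= hz; exists (e - d x z); split; first lra.
move=> w /= hw; have := mc_tri x z w; lra.
Qed.

Lemma nbhs_ball x e : 0 < e -> nbhs x [set z | d x z < e].
Proof.
move=> e0; rewrite nbhsE; exists [set z | d x z < e] => //.
split; first exact: ball_open.
by rewrite /= mc_refl.
Qed.

Lemma nbhs_ballP x U : nbhs x U -> exists e, 0 < e /\ [set z | d x z < e] `<=` U.
Proof.
rewrite nbhsE => -[B [oB Bx] BU].
have [e [e0 h]] := (mc_open B).1 oB x Bx.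
by exists e; split => // z /h /BU.
Qed.

Lemma cvg_ev (u : nat -> T) x e : u @ \oo --> x -> 0 < e ->
  exists N, forall n, (N <= n)%N -> d x (u n) < e.
Proof.
move=> h e0; have := h _ (nbhs_ball x e0).
by case=> N _ HN; exists N => n /HN.
Qed.

Lemma lim_le (u : nat -> T) x w c : u @ \oo --> x ->
  (exists N, forall n, (N <= n)%N -> d (u n) w <= c) -> d x w <= c.
Proof.
move=> h [N HN]; apply: Rnot_lt_le => hlt.
have [N' HN'] := cvg_ev (e := d x w - c) h ltac:(lra).
have := HN (maxn N N') (leq_maxl _ _).
have := HN' (maxn N N') (leq_maxr _ _).
have := mc_tri x (u (maxn N N')) w; lra.
Qed.

Lemma eq_small a b : (forall e, 0 < e -> d a b < e) -> a = b.
Proof.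
move=> h; apply/mc_zero; have := mc_nonneg a b => h0.
case: (Rle_lt_or_eq_dec _ _ h0) => // hlt.
have := h _ hlt; lra.
Qed.

End Metric.

Lemma cont_delta (T1 T2 : topologicalType) (d1 : T1 -> T1 -> R) (d2 : T2 -> T2 -> R)
  (f : T1 -> T2) : metric_compatible d1 -> metric_compatible d2 -> continuous f ->
  forall x e, 0 < e -> exists de, 0 < de /\ forall z, d1 x z < de -> d2 (f x) (f z) < e.
Proof.
move=> h1 h2 hf x e e0.
have := hf x _ (nbhs_ball h2 (f x) e0) => /(nbhs_ballP h1)[de [de0 hde]].
by exists de; split => // z /hde.
Qed.

Section MT.
Variables (T : Type) (rho : T -> T -> R).
Definition mt : Type := let _ := rho in T.
HB.instance Definition _ := gen_eqMixin mt.
HB.instance Definition _ := gen_choiceMixin mt.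
Definition mop (U : set mt) := forall x, U x -> exists e, 0 < e /\ [set y | rho x y < e] `<=` U.
Lemma mopT : mop setT. Proof. by move=> x _; exists 1; split => //; lra. Qed.
Lemma mopI : setI_closed mop.
Proof.
move=> A B hA hB x [/hA [e1 [e10 h1]] /hB [e2 [e20 h2]]].
exists (Rmin e1 e2); split; first by apply: Rmin_pos.
move=> z /= hz; split; [apply: h1 | apply: h2] => /=.
  by have := Rmin_l e1 e2; lra.
by have := Rmin_r e1 e2; lra.
Qed.
Lemma mop_bigU (I : Type) (f : I -> set mt) : (forall i, mop (f i)) -> mop (\bigcup_i f i).
Proof.
move=> h x [i _ /h [e [e0 he]]]; exists e; split => // z /he hz; by exists i.
Qed.
HB.instance Definition _ := isOpenTopological.Build mt mopT mopI mop_bigU.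

Lemma mt_openE (U : set mt) : open U <-> mop U.
Proof. by []. Qed.

Lemma mt_metric : (forall x y, 0 <= rho x y) -> (forall x y, rho x y = 0 <-> x = y) ->
  (forall x y, rho x y = rho y x) -> (forall x y z, rho x z <= rho x y + rho y z) ->
  metric_compatible (rho : mt -> mt -> R).
Proof. move=> h1 h2 h3 h4; split => //. Qed.
End MT.

Definition eps (n : nat) : R := / (INR n + 1).
Lemma eps_pos n : 0 < eps n.
Proof. rewrite /eps; apply: Rinv_0_lt_compat; have := pos_INR n; lra. Qed.
Lemma eps_le m n : (m <= n)%N -> eps n <= eps m.
Proof.
move=> /leP h; rewrite /eps; apply: Rinv_le_contravar.
  have := pos_INR m; lra.
have := le_INR _ _ h; lra.
Qed.
Lemma eps_small e : 0 < e -> exists n, eps n < e.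
Proof.
move=> e0; have [N [hN N0]] := archimed_cor1 _ e0.
exists N; rewrite /eps; apply: Rle_lt_trans hN; apply: Rinv_le_contravar.
  exact: (lt_0_INR _ N0).
lra.
Qed.

Lemma fin_bound (K : set nat) : finite_set K -> exists B, forall n, K n -> (n < B)%N.
Proof.
move=> /finite_fsetP [F ->]; exists (\max_(i <- F) i).+1 => n /= hn.
rewrite ltnS; exact: (@leq_bigmax_seq _ _ predT (fun i => i) n hn).
Qed.

Lemma inf_unb (D : set nat) : infinite_set D -> forall M, exists n, D n /\ (M <= n)%N.
Proof.
move=> hD M; apply: contrapT => h; apply: hD.
apply: (sub_finite_set _ (finite_II M)) => n Dn /=.
rewrite ltnNge; apply/negP => hM; apply: h; by exists n.
Qed.

Lemma unb_inf (D : set nat) : (forall M, exists n, D n /\ (M <= n)%N) -> infinite_set D.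
Proof.
move=> h fD; have [B hB] := fin_bound fD; have [n [Dn hn]] := h B.
by have := hB n Dn; rewrite ltnNge hn.
Qed.

Lemma mkp_proof a b : (minn a b < maxn a b + (a == b))%N.
Proof. case: eqP => [->|h]; rewrite ?minnn ?maxnn; lia. Qed.

Definition mkp (a b : nat) : pair2 := exist _ (minn a b, maxn a b + (a == b))%N (mkp_proof a b).
Lemma pP (s : pair2) : (pmin s < pmax s)%N. Proof. exact: (svalP s). Qed.
Lemma mkp_min a b : pmin (mkp a b) = minn a b. Proof. by []. Qed.
Lemma mkp_max a b : a <> b -> pmax (mkp a b) = maxn a b.
Proof. by move=> /eqP/negbTE h; rewrite /pmax /= h addn0. Qed.
Lemma pair2_eq (s t : pair2) : sval s = sval t -> s = t.
Proof. apply: eq_sig_hprop => x p q; exact: Prop_irrelevance. Qed.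
Lemma mkpC a b : mkp a b = mkp b a.
Proof. by apply: pair2_eq; rewrite /= minnC maxnC eq_sym. Qed.
Lemma mkpK s : mkp (pmin s) (pmax s) = s.
Proof.
apply: pair2_eq; case: s => [[a b] h] /=; rewrite /pmin /pmax /= in h *.
have -> : (a == b) = false by apply/eqP => e; rewrite e ltnn in h.
by rewrite addn0 (minn_idPl (ltnW h)) (maxn_idPr (ltnW h)).
Qed.
Lemma minn_mem (P : nat -> Prop) m n : P m -> P n -> P (minn m n).
Proof. by rewrite /minn; case: ifP. Qed.
Lemma maxn_mem (P : nat -> Prop) m n : P m -> P n -> P (maxn m n).
Proof. by rewrite /maxn; case: ifP. Qed.

Lemma fin_pairs B : finite_set [set s : pair2 | (pmax s < B)%N].
Proof.
apply: (sub_finite_set (B := (fun p => mkp p.1 p.2) @` (`I_B `*` `I_B))).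
  move=> s /= hs; exists (pmin s, pmax s); last exact: mkpK.
  by split => //=; have := pP s; lia.
by apply: finite_image; apply: finite_setX; exact: finite_II.
Qed.

Lemma LR_sub_Lr (X : topologicalType) (y : pair2 -> X) : Lambda_R y `<=` Lambda_r y.
Proof.
move=> eta [E [hE hconv]].
have [D [iD sDE]] : exists D, infinite_set D /\ sq2 D `<=` E.
  apply: contrapT => h; apply: hE => D iD sD; apply: h; by exists D.
exists D; split => // U hU; have fF := hconv U hU.
exists (pmin @` [set s | E s /\ ~ U (y s)] `|` pmax @` [set s | E s /\ ~ U (y s)]).
split; first by rewrite finite_setU; split; apply: finite_image.
move=> s [[Ds nK1] [Ds' nK2]]; apply: contrapT => nU; apply: nK1; left.
by exists s => //; split => //; apply: sDE.
Qed.

Lemma code_size (s : seq nat) : (size s <= CodeSeq.code s)%N.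
Proof.
elim: s => //= n s IH.
apply: leq_trans (leq_pmull _ (expn_gt0 2 n)); rewrite ltnS -addnn.
exact: leq_trans IH (leq_addr _ _).
Qed.

Definition pre (s t : seq nat) := (size s <= size t)%N /\
  forall i, (i < size s)%N -> nth 0%N s i = nth 0%N t i.

Lemma pre_eqsize s t : pre s t -> size s = size t -> s = t.
Proof. by move=> [_ h] hs; apply: (@eq_from_nth _ 0%N) => // i hi; apply: h. Qed.
Lemma pre_take s t : pre s t -> take (size s) t = s.
Proof.
move=> [h1 h2]; apply: (@eq_from_nth _ 0%N); first by rewrite size_takel.
by move=> i; rewrite size_takel // => hi; rewrite nth_take // h2.
Qed.
Definition dec n := CodeSeq.decode n.
Lemma dec_inj : injective dec.
Proof. by move=> n m h; rewrite -(CodeSeq.decodeK n) -(CodeSeq.decodeK m); congr CodeSeq.code. Qed.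

Section PartB.
Variables (X Y : topologicalType) (dX : X -> X -> R) (rho : Y -> Y -> R).
Hypotheses (hX : metric_compatible dX) (hY : metric_compatible rho) (cY : metric_complete rho).
Variables (f : Y -> X) (e : nat -> Y) (b : X).
Hypotheses (fc : continuous f)
  (edense : forall z r, 0 < r -> exists n, rho z (e n) < r)
  (bC : exists z0, f z0 = b).

Definition good (t : seq nat) := (0 < size t)%N /\ forall i j, (i < j)%N -> (j < size t)%N ->
  rho (e (nth 0%N t i)) (e (nth 0%N t j)) <= eps i.
Definition valB (t : seq nat) := f (e (last 0%N t)).
Definition yB (s : pair2) : X :=
  if pselect (pre (dec (pmin s)) (dec (pmax s)) /\ good (dec (pmax s))) then valB (dec (pmax s))
  else if pselect (pre (dec (pmax s)) (dec (pmin s)) /\ good (dec (pmin s))) then valB (dec (pmin s))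
  else b.

Lemma yB_lt n m : n <> m -> pre (dec n) (dec m) -> good (dec m) -> yB (mkp n m) = valB (dec m).
Proof.
move=> nm hp hg; rewrite /yB mkp_min mkp_max //.
case: (ltngtP n m) => h; last by [].
- by case: (pselect (pre (dec n) (dec m) /\ good (dec m))) => [//|[]]; split.
- case: (pselect (pre (dec m) (dec n) /\ good (dec n))) => [p|?] /=.
    by have [hp' _] := p; exfalso; apply: nm; apply: dec_inj; symmetry; apply: (pre_eqsize hp'); apply/eqP;
      rewrite eqn_leq hp'.1 hp.1.
  by case: (pselect (pre (dec n) (dec m) /\ good (dec m))) => [//|[]]; split.
Qed.

Lemma yB_neb n m : n <> m -> yB (mkp n m) <> b ->
  (pre (dec n) (dec m) /\ good (dec m)) \/ (pre (dec m) (dec n) /\ good (dec n)).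
Proof.
move=> nm; rewrite /yB mkp_min mkp_max //.
case: (ltngtP n m) => h; last by [].
- case: (pselect (pre (dec n) (dec m) /\ good (dec m))) => [hh|?] /=; first by left.
  by case: (pselect (pre (dec m) (dec n) /\ good (dec n))) => [hh|? //] /=; right.
- case: (pselect (pre (dec m) (dec n) /\ good (dec n))) => [hh|?] /=; first by right.
  by case: (pselect (pre (dec n) (dec m) /\ good (dec m))) => [hh|? //] /=; left.
Qed.

Lemma C_sub_LR : f @` setT `<=` Lambda_R yB.
Proof.
move=> _ [z _ <-].
have /choice [a ha] : forall i, exists n, rho z (e n) < eps i / 2.
  move=> i; apply: edense; have := eps_pos i; lra.
pose c l := CodeSeq.code (mkseq a l.+1).
have dc l : dec (c l) = mkseq a l.+1 by exact: CodeSeq.codeK.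
have goodc l : good (dec (c l)).
  rewrite dc; split; first by rewrite size_mkseq.
  move=> i j hij; rewrite size_mkseq => hj; rewrite !nth_mkseq //; last exact: ltn_trans hj.
  have := mc_tri hY (e (a i)) z (e (a j)); rewrite (mc_sym hY (e (a i)) z).
  have := ha i; have := ha j; have := eps_le (ltnW hij); lra.
have prec l l' : (l <= l')%N -> pre (dec (c l)) (dec (c l')).
  move=> hl; rewrite !dc; split; rewrite !size_mkseq // => i hi; rewrite !nth_mkseq //; lia.
have valc l : valB (dec (c l)) = f (e (a l)).
  by rewrite /valB dc -nth_last size_mkseq nth_mkseq.
have cinj : injective c.
  move=> l l' h; have : size (dec (c l)) = size (dec (c l')) by rewrite h.
  by rewrite !dc !size_mkseq => -[].
have yc l l' : l <> l' -> yB (mkp (c l) (c l')) = f (e (a (maxn l l'))).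
  move=> ll; have cc : c l <> c l' by move/cinj.
  case: (ltngtP l l') => h; last by [].
  - by rewrite yB_lt // ?valc ?(maxn_idPr (ltnW h)) //; apply: prec; apply: ltnW.
  - rewrite mkpC yB_lt ?valc ?(maxn_idPl (ltnW h)) //; first by move=> /esym.
    by apply: prec; apply: ltnW.
exists (sq2 (range c)); split.
  move=> h; apply: (h (range c)) => //; apply: unb_inf => M.
  exists (c M); split; first by exists M.
  by apply: leq_trans (code_size _); rewrite size_mkseq.
move=> U hU.
have [r [r0 hr]] := nbhs_ballP hX hU.
have [de [de0 hde]] := cont_delta hY hX fc z r0.
have [L hL] := eps_small de0.
have [B hB] := fin_bound (finite_image c (finite_II L)).
apply: (sub_finite_set _ (fin_pairs B)) => s /= [[[l _ hl] [l' _ hl']] nU].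
have ll : l <> l' by move=> E; have := pP s; rewrite -hl -hl' E ltnn.
have hs : s = mkp (c l) (c l') by rewrite hl hl' mkpK.
suff hm : (maxn l l' < L)%N.
  by rewrite -hl'; apply: hB; exists l' => //=; apply: leq_ltn_trans hm; exact: leq_maxr.
rewrite ltnNge; apply/negP => hm; apply: nU; rewrite hs yc //; apply: hr => /=; apply: hde.
have := ha (maxn l l'); have := eps_le hm; have := eps_pos (maxn l l'); lra.
Qed.


Lemma comp_neb n m : n <> m -> yB (mkp n m) <> b ->
  (pre (dec n) (dec m) /\ good (dec m)) \/ (pre (dec m) (dec n) /\ good (dec n)).
Proof. exact: yB_neb. Qed.

Lemma Lr_sub_C : Lambda_r yB `<=` f @` setT.
Proof.
move=> eta [D [iD hconv]].
case: (pselect (eta = b)) => [->|neb]; first by case: bC => z0 <-; exists z0.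
have r0 : 0 < dX eta b.
  have := mc_nonneg hX eta b => h; case: (Rle_lt_or_eq_dec _ _ h) => // /esym /(mc_zero hX).
  by move=> /neb.
have [K [fK hK]] := hconv _ (nbhs_ball hX eta r0).
pose D' := D `\` K.
have iD' : infinite_set D' := infinite_setD iD fK.
have comp n m : D' n -> D' m -> n <> m ->
    (pre (dec n) (dec m) /\ good (dec m)) \/ (pre (dec m) (dec n) /\ good (dec n)).
  move=> hn hm nm; apply: yB_neb => // hb.
  have hs : sq2 D' (mkp n m) by rewrite /sq2 /= mkp_min mkp_max //; split;
    [apply: minn_mem | apply: maxn_mem].
  by have := hK _ hs; rewrite /= hb; lra.
have unb S : S `<=` D' -> infinite_set S -> forall L, exists n, S n /\ (L <= size (dec n))%N.
  move=> sS iS L; apply: contrapT => h; apply: iS.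
  have hL : forall n, S n -> (size (dec n) < L)%N.
    move=> n Sn; rewrite ltnNge; apply/negP => hh; apply: h; by exists n.
  elim: L hL {h} => [|L IH] hL.
    by apply: (sub_finite_set _ (finite_set0 nat)) => n /hL.
  case: (pselect (exists n1, S n1 /\ size (dec n1) = L)) => [[n1 [Sn1 hs1]]|nex].
    apply: (sub_finite_set _ (finite_image (fun k => CodeSeq.code (take k (dec n1))) (finite_II L.+1))).
    move=> n Sn; exists (size (dec n)); first exact: hL.
    case: (pselect (n = n1)) => [->|nn1]; first by rewrite take_size CodeSeq.decodeK.
    case: (comp n n1 (sS _ Sn) (sS _ Sn1) nn1) => [[hp _]|[hp _]].
      by rewrite /= (pre_take hp) CodeSeq.decodeK.
    exfalso; apply: nn1; apply: dec_inj; symmetry; apply: (pre_eqsize hp).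
    by have := hL n Sn; have := hp.1; rewrite hs1; lia.
  apply: IH => n Sn; have := hL n Sn; rewrite ltnS leq_eqVlt => /orP[/eqP hh|//].
  by exfalso; apply: nex; exists n.
have /choice [mm hmm] : forall i, exists m, [/\ D' m, (i < size (dec m))%N & good (dec m)].
  move=> i; have [m [Dm hm]] := unb D' (@subset_refl _ _) iD' i.+1.
  have [m' [Dm' hm']] := unb D' (@subset_refl _ _) iD' (size (dec m)).+1.
  have mm' : m <> m' by move=> E; rewrite E in hm'; rewrite ltnn in hm'.
  case: (comp m m' Dm Dm' mm') => [[hp hg]|[hp hg]].
    by exists m'; split => //; apply: leq_trans hm (ltnW hm').
  by have := hp.1; rewrite leqNgt hm'.
pose a i := nth 0%N (dec (mm i)) i.
have cons n i : D' n -> (i < size (dec n))%N -> nth 0%N (dec n) i = a i.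
  move=> Dn hi; rewrite /a; have [Dm hm _] := hmm i.
  case: (pselect (n = mm i)) => [->//|nm].
  case: (comp n (mm i) Dn Dm nm) => [[hp _]|[hp _]]; first exact: hp.2.
  by symmetry; apply: hp.2.
have link i j : (i < j)%N -> rho (e (a i)) (e (a j)) <= eps i.
  move=> hij; have [Dm hm hg] := hmm j.
  rewrite -(cons (mm j) i Dm (ltn_trans hij hm)) -(cons (mm j) j Dm hm).
  exact: hg.2.
have cauchy : forall r, 0 < r -> exists N, forall n m, (N <= n)%N -> (N <= m)%N ->
    rho (e (a n)) (e (a m)) < r.
  move=> r r0'; have [N hN] := eps_small r0'; exists N => n m hn hm.
  case: (ltngtP n m) => h.
  - by have := link _ _ h; have := eps_le hn; lra.
  - by rewrite (mc_sym hY); have := link _ _ h; have := eps_le hm; lra.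
  - by rewrite h (mc_refl hY).
have [z hz] := cY cauchy.
have bz k : rho z (e (a k)) <= eps k.
  apply: (lim_le hY hz); exists k.+1 => n hn; rewrite (mc_sym hY); exact: link.
exists z => //; apply: contrapT => hne.
have r2 : 0 < dX eta (f z) / 2.
  have := mc_nonneg hX eta (f z) => h; case: (Rle_lt_or_eq_dec _ _ h) => [|/esym /(mc_zero hX) /esym //]; lra.
have [K1 [fK1 hK1]] := hconv _ (nbhs_ball hX eta r2).
have [de [de0 hde]] := cont_delta hY hX fc z r2.
have [L hL] := eps_small de0.
pose S := D' `\` K1.
have sS : S `<=` D' by move=> n [].
have iS : infinite_set S := infinite_setD iD' fK1.
have [m [Sm hm]] := unb S sS iS L.
have [n [Sn hn]] := unb S sS iS (size (dec m)).+1.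
have mn : m <> n by move=> E; rewrite E ltnn in hn.
have [hp hg] : pre (dec m) (dec n) /\ good (dec n).
  case: (comp m n (sS _ Sm) (sS _ Sn) mn) => // -[hp _].
  by have := hp.1; rewrite leqNgt hn.
have hy := yB_lt mn hp hg.
have hk : valB (dec n) = f (e (a (size (dec n)).-1)).
  rewrite /valB -nth_last cons //; first exact: sS.
  by case: (size (dec n)) hn.
have hs : sq2 (D `\` K1) (mkp m n).
  have h1 : (D `\` K1) m by case: Sm => -[? _] ?.
  have h2 : (D `\` K1) n by case: Sn => -[? _] ?.
  by rewrite /sq2 /= mkp_min mkp_max //; split; [apply: (minn_mem (P := D `\` K1)) | apply: (maxn_mem (P := D `\` K1))].
have d1 := hK1 _ hs.
have d2 : dX (f z) (yB (mkp m n)) < dX eta (f z) / 2.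
  rewrite hy hk; apply: hde.
  have := bz (size (dec n)).-1.
  have : (L <= (size (dec n)).-1)%N by case: (size (dec n)) hn => // k; rewrite ltnS => /(leq_trans hm).
  move=> /eps_le; lra.
have := mc_tri hX eta (yB (mkp m n)) (f z); rewrite (mc_sym hX (yB _) (f z)); simpl in d1; lra.
Qed.

End PartB.

Lemma inc_lt (f : nat -> nat) : (forall i, (f i < f i.+1)%N) -> forall i j, (i < j)%N -> (f i < f j)%N.
Proof.
move=> h i j; elim: j => // j IH; rewrite ltnS leq_eqVlt => /orP[/eqP->|/IH hj] //.
exact: ltn_trans hj (h j).
Qed.
Lemma inc_ge (f : nat -> nat) : (forall i, (f i < f i.+1)%N) -> forall i, (i <= f i)%N.
Proof. move=> h; elim => // i IH; exact: leq_ltn_trans IH (h i). Qed.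
Lemma mono_le (f : nat -> nat) : (forall i, (f i <= f i.+1)%N) -> forall i j, (i <= j)%N -> (f i <= f j)%N.
Proof.
move=> h i j; elim: j => [|j IH]; first by rewrite leqn0 => /eqP->.
rewrite leq_eqVlt => /orP[/eqP->|] //; rewrite ltnS => /IH hj; exact: leq_trans hj (h j).
Qed.
Lemma inc_lt_inv (f : nat -> nat) : (forall i, (f i < f i.+1)%N) -> forall i j, (f i < f j)%N -> (i < j)%N.
Proof.
move=> h i j hij; rewrite ltnNge; apply/negP => hji.
move: hji; rewrite leq_eqVlt => /orP[/eqP E|/(inc_lt h) hh]; first by rewrite E ltnn in hij.
by have := ltn_trans hij hh; rewrite ltnn.
Qed.
Lemma bound_fin (F : nat -> nat) m : exists n0, forall i, (i < m)%N -> (F i <= n0)%N.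
Proof.
elim: m => [|m [n0 h]]; first by exists 0%N.
exists (maxn n0 (F m)) => i; rewrite ltnS leq_eqVlt => /orP[/eqP->|/h hi]; first exact: leq_maxr.
exact: leq_trans hi (leq_maxl _ _).
Qed.

Definition rr (g h : nat -> nat * nat) : R :=
  match pselect (exists i, g i != h i) with
  | left H => eps (ex_minn H)
  | right _ => 0
  end.

Lemma rr_spec g h : (g = h /\ rr g h = 0) \/
  (exists n, g n <> h n /\ (forall i, (i < n)%N -> g i = h i) /\ rr g h = eps n).
Proof.
rewrite /rr; case: pselect => [H|H].
  case: ex_minnP => n /eqP hn hmin; right; exists n; split => //; split => // i hi.
  apply: contrapT => /eqP hne; have := hmin i hne; by rewrite leqNgt hi.
left; split => //; apply: funext => i; apply: contrapT => hne; apply: H; exists i; exact/eqP.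
Qed.

Lemma rr_ge0 g h : 0 <= rr g h.
Proof. case: (rr_spec g h) => [[_ ->]|[n [_ [_ ->]]]]; [lra | exact: Rlt_le (eps_pos n)]. Qed.
Lemma rr_agree g h n : (forall i, (i < n)%N -> g i = h i) -> rr g h <= eps n.
Proof.
move=> ha; case: (rr_spec g h) => [[_ ->]|[m [hm [_ ->]]]]; first exact: Rlt_le (eps_pos n).
apply: eps_le; rewrite leqNgt; apply/negP => hmn; exact: hm (ha m hmn).
Qed.
Lemma rr_ge g h m : g m <> h m -> eps m <= rr g h.
Proof.
move=> hm; case: (rr_spec g h) => [[E _]|[n [hn [ha ->]]]]; first by rewrite E in hm.
apply: eps_le; rewrite leqNgt; apply/negP => hmn; exact: hm (ha m hmn).
Qed.
Lemma rr_lt g h n : rr g h < eps n -> forall i, (i <= n)%N -> g i = h i.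
Proof.
move=> hl i hi; apply: contrapT => hne; have := rr_ge hne; have := eps_le hi; lra.
Qed.
Lemma rr_zero g h : rr g h = 0 <-> g = h.
Proof.
split; last by move=> E; subst h; case: (rr_spec g g) => [[_ ->]|[n [hn _]]].
case: (rr_spec g h) => [[-> _]|[n [_ [_ ->]]]] // E; have := eps_pos n; lra.
Qed.
Lemma rr_sym g h : rr g h = rr h g.
Proof.
case: (rr_spec g h) => [[-> ->]|[n [hn [ha ->]]]].
  by [].
case: (rr_spec h g) => [[E _]|[m [hm [hb ->]]]]; first by rewrite E in hn.
have -> // : n = m; apply/eqP; rewrite eqn_leq; apply/andP; split.
  rewrite leqNgt; apply/negP => hmn; exact: hm (esym (ha m hmn)).
rewrite leqNgt; apply/negP => hmn; exact: hn (esym (hb n hmn)).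
Qed.
Lemma rr_tri g h k : rr g k <= rr g h + rr h k.
Proof.
case: (rr_spec g k) => [[_ ->]|[n [hn [_ ->]]]].
  by have := rr_ge0 g h; have := rr_ge0 h k; lra.
case: (pselect (g n = h n)) => E.
  have : h n <> k n by rewrite -E.
  by move=> /rr_ge; have := rr_ge0 g h; lra.
by have := rr_ge E; have := rr_ge0 h k; lra.
Qed.

Section PartA.
Variables (X : topologicalType) (dX : X -> X -> R).
Hypotheses (hX : metric_compatible dX) (cX : metric_complete dX).
Variables (y : pair2 -> X) (mode : bool).

Definition dd (g : nat -> nat * nat) i := (g i).1.
Definition NN (g : nat -> nat * nat) k := (g k).2.
Definition cond (g : nat -> nat * nat) k i j : bool :=
  if mode then (NN g k <= i)%N else (NN g k <= j)%N.

Definition Pw (g : nat -> nat * nat) : Prop :=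
  [/\ (forall i, (dd g i < dd g i.+1)%N), (forall k, (NN g k <= NN g k.+1)%N) &
    (forall k (s t : pair2) i j i' j', pmin s = dd g i -> pmax s = dd g j ->
       pmin t = dd g i' -> pmax t = dd g j' -> cond g k i j -> cond g k i' j' ->
       dX (y s) (y t) < eps k)].

Lemma Pw_closed g : (forall m, exists h, Pw h /\ forall i, (i < m)%N -> g i = h i) -> Pw g.
Proof.
move=> H; split.
- move=> i; have [h [[h1 _ _] ha]] := H i.+2.
  by rewrite /dd !ha //; apply: h1.
- move=> k; have [h [[_ h2 _] ha]] := H k.+2.
  by rewrite /NN !ha //; apply: h2.
- move=> k s t i j i' j'.
  have [h [[_ _ h3] ha]] := H (k + i + j + i' + j').+1.
  rewrite /dd /cond /NN !ha; try lia.
  exact: h3.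
Qed.

Definition W := {g : nat -> nat * nat | Pw g}.
Definition rhoW (w w' : W) : R := rr (sval w) (sval w').
Definition MW := mt rhoW.

Lemma rhoW_metric : metric_compatible (rhoW : MW -> MW -> R).
Proof.
apply: mt_metric.
- move=> ? ?; exact: rr_ge0.
- move=> w w'; rewrite /rhoW rr_zero; split => [E|->//].
  by apply: eq_sig_hprop => // x p q; exact: Prop_irrelevance.
- move=> ? ?; exact: rr_sym.
- move=> ? ? ?; exact: rr_tri.
Qed.

Lemma rhoW_complete : metric_complete (rhoW : MW -> MW -> R).
Proof.
move=> u hu.
have /choice [Nf hNf] : forall i, exists N, forall n m, (N <= n)%N -> (N <= m)%N ->
    rhoW (u n) (u m) < eps i.
  by move=> i; apply: hu; exact: eps_pos.
pose g i := sval (u (Nf i)) i.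
have hg i n : (Nf i <= n)%N -> sval (u n) i = g i.
  move=> hn; symmetry; apply: (rr_lt (hNf i _ _ (leqnn _) hn)); exact: leqnn.
have agree m : exists n0, forall n, (n0 <= n)%N -> forall i, (i < m)%N -> sval (u n) i = g i.
  have [n0 h0] := bound_fin Nf m; exists n0 => n hn i hi; apply: hg; exact: leq_trans (h0 i hi) hn.
have Pg : Pw g.
  apply: Pw_closed => m; have [n0 h0] := agree m; exists (sval (u n0)); split.
    exact: (svalP (u n0)).
  by move=> i hi; rewrite (h0 n0 (leqnn _) i hi).
exists (exist _ g Pg : MW) => A /(nbhs_ballP rhoW_metric)[r [r0 hr]].
have [k hk] := eps_small r0; have [n0 h0] := agree k.
exists n0 => // n hn; apply: hr => /=.
rewrite /rhoW /= rr_sym; apply: Rle_lt_trans hk; apply: rr_agree => i hi.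
exact: h0.
Qed.

Lemma MW_separable : separable_space MW.
Proof.
case: (pselect (exists w : W, True)) => [[w0 _]|nW]; last first.
  exists set0; split => //; rewrite closure0; apply/seteqP; split => // w _.
  by apply: nW; exists w.
pose pickw (s : seq (nat * nat)) : MW :=
  match pselect (exists w : W, forall i, (i < size s)%N -> sval w i = nth (0, 0)%N s i) with
  | left H => projT1 (cid H)
  | right _ => w0
  end.
exists (range pickw); split.
  apply: (sub_countable (card_image_le pickw setT)); exact: countableP.
apply/seteqP; split => // w _ B /(nbhs_ballP rhoW_metric)[r [r0 hr]].
have [k hk] := eps_small r0.
pose s := mkseq (sval w) k.
have ex : exists w' : W, forall i, (i < size s)%N -> sval w' i = nth (0, 0)%N s i.
  by exists w => i; rewrite size_mkseq => hi; rewrite nth_mkseq.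
exists (pickw s); split; first by exists s.
apply: hr => /=; rewrite /pickw; case: pselect => [H|//].
case: (cid H) => w' /= hw'; apply: Rle_lt_trans hk; apply: rr_agree => i hi.
by rewrite hw' ?size_mkseq // nth_mkseq.
Qed.

Lemma Pw_inc (w : W) : forall i, (dd (sval w) i < dd (sval w) i.+1)%N.
Proof. by case: (svalP w). Qed.
Lemma Pw_Nmono (w : W) : forall k, (NN (sval w) k <= NN (sval w) k.+1)%N.
Proof. by case: (svalP w). Qed.
Lemma Pw_cauchy (w : W) : forall k (s t : pair2) i j i' j',
  pmin s = dd (sval w) i -> pmax s = dd (sval w) j ->
  pmin t = dd (sval w) i' -> pmax t = dd (sval w) j' ->
  cond (sval w) k i j -> cond (sval w) k i' j' -> dX (y s) (y t) < eps k.
Proof. by case: (svalP w). Qed.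

Definition uu (w : W) k :=
  y (mkp (dd (sval w) (NN (sval w) k)) (dd (sval w) (NN (sval w) k).+1)).

Lemma uu_pair (w : W) k : pmin (mkp (dd (sval w) (NN (sval w) k)) (dd (sval w) (NN (sval w) k).+1))
    = dd (sval w) (NN (sval w) k) /\
  pmax (mkp (dd (sval w) (NN (sval w) k)) (dd (sval w) (NN (sval w) k).+1))
    = dd (sval w) (NN (sval w) k).+1.
Proof.
have h := Pw_inc w (NN (sval w) k).
rewrite mkp_min mkp_max; last by move=> E; rewrite E ltnn in h.
by rewrite (minn_idPl (ltnW h)) (maxn_idPr (ltnW h)).
Qed.

Lemma cond_uu (w : W) k m : (k <= m)%N ->
  cond (sval w) k (NN (sval w) m) (NN (sval w) m).+1.
Proof.
move=> hkm; have h := mono_le (Pw_Nmono w) hkm.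
by rewrite /cond; case: mode => //; apply: leq_trans h (leqnSn _).
Qed.

Lemma uu_cauchy (w : W) k m : (k <= m)%N -> dX (uu w k) (uu w m) < eps k.
Proof.
move=> hkm; have [a1 a2] := uu_pair w k; have [b1 b2] := uu_pair w m.
apply: (Pw_cauchy a1 a2 b1 b2); [exact: cond_uu | exact: cond_uu].
Qed.

Lemma fW_ex (w : W) : exists x, forall k, dX (uu w k) x <= eps k.
Proof.
have ca : forall r, 0 < r -> exists N, forall n m, (N <= n)%N -> (N <= m)%N ->
    dX (uu w n) (uu w m) < r.
  move=> r r0; have [N hN] := eps_small r0; exists N => n m hn hm.
  case: (leqP n m) => h.
    by have := uu_cauchy w h; have := eps_le hn; lra.
  by rewrite (mc_sym hX); have := uu_cauchy w (ltnW h); have := eps_le hm; lra.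
have [x hx] := cX ca; exists x => k; rewrite (mc_sym hX).
apply: (lim_le hX hx); exists k => m hm; rewrite (mc_sym hX).
exact: Rlt_le (uu_cauchy w hm).
Qed.

Definition fW (w : MW) : X := projT1 (cid (fW_ex w)).
Lemma fW_spec (w : W) k : dX (uu w k) (fW w) <= eps k.
Proof. by rewrite /fW; case: (cid _) => x /=. Qed.

Lemma fW_cont : continuous fW.
Proof.
apply/continuousP => A oA; rewrite mt_openE => w /= Aw.
have [r [r0 hr]] := (mc_open hX A).1 oA _ Aw.
have r2 : 0 < r / 2 by lra.
have [k hk] := eps_small r2.
pose M := (maxn k (NN (sval w) k).+1).+1.
exists (eps M); split; first exact: eps_pos.
move=> w' /= hw'; apply: hr => /=.
have ag := rr_lt hw'.
have eu : uu w k = uu w' k.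
  have e1 : NN (sval w) k = NN (sval w') k by rewrite /NN ag //; lia.
  rewrite /uu /dd -e1 !ag //; lia.
have := fW_spec w k; have := fW_spec w' k; rewrite -eu.
have := mc_tri hX (fW w) (uu w k) (fW w'); rewrite (mc_sym hX (fW w) (uu w k)); lra.
Qed.

Lemma fW_close (w : W) k (s : pair2) i j : pmin s = dd (sval w) i -> pmax s = dd (sval w) j ->
  cond (sval w) k i j -> dX (y s) (fW w) <= eps k.
Proof.
move=> h1 h2 hc; apply: Rnot_lt_le => hlt.
have [m0 hm0] := eps_small (Rlt_Rminus _ _ hlt).
have [b1 b2] := uu_pair w (maxn k m0).
have c1 := Pw_cauchy h1 h2 b1 b2 hc (cond_uu w (leq_maxl k m0)).
have := fW_spec w (maxn k m0); have := eps_le (leq_maxr k m0).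
have := mc_tri hX (y s) (uu w (maxn k m0)) (fW w); rewrite /uu in c1 *; lra.
Qed.

Lemma range_inf (w : W) : infinite_set (range (dd (sval w))).
Proof.
apply: unb_inf => M; exists (dd (sval w) M); split; first by exists M.
exact: inc_ge (Pw_inc w) M.
Qed.


Lemma img_r (hm : mode = true) : fW @` setT `<=` Lambda_r y.
Proof.
move=> _ [w _ <-]; exists (range (dd (sval w))); split; first exact: range_inf.
move=> U /(nbhs_ballP hX)[r [r0 hr]]; have [k hk] := eps_small r0.
exists (dd (sval w) @` `I_(NN (sval w) k)); split; first exact: finite_image (finite_II _).
move=> s [[[i _ hi] nK1] [[j _ hj] nK2]].
apply: hr => /=; rewrite (mc_sym hX); apply: Rle_lt_trans hk.
apply: (fW_close (esym hi) (esym hj)).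
rewrite /cond hm leqNgt; apply/negP => hlt; apply: nK1; by exists i.
Qed.

Lemma img_R (hm : mode = false) : fW @` setT `<=` Lambda_R y.
Proof.
move=> _ [w _ <-]; exists (sq2 (range (dd (sval w)))); split.
  move=> h; apply: (h (range (dd (sval w)))) => //; exact: range_inf.
move=> U /(nbhs_ballP hX)[r [r0 hr]]; have [k hk] := eps_small r0.
apply: (sub_finite_set _ (fin_pairs (dd (sval w) (NN (sval w) k)))).
move=> s /= [[[i _ hi] [j _ hj]] nU].
rewrite -hj; apply: (inc_lt (Pw_inc w)); rewrite ltnNge; apply/negP => hle.
apply: nU; apply: hr => /=; rewrite (mc_sym hX); apply: Rle_lt_trans hk.
by apply: (fW_close (esym hi) (esym hj)); rewrite /cond hm.
Qed.

Lemma build (eta : X) (D : set nat) (B : nat -> nat) : infinite_set D ->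
  (forall k (s : pair2), D (pmin s) -> D (pmax s) ->
     (if mode then (B k <= pmin s)%N else (B k <= pmax s)%N) -> dX eta (y s) < eps k / 2) ->
  exists w : W, fW w = eta.
Proof.
move=> iD hyp.
have /choice [nxt hnxt] : forall n, exists m, D m /\ (n < m)%N.
  by move=> n; apply: inf_unb.
pose d i := iter i.+1 nxt 0%N.
have dD i : D (d i) by exact: (hnxt _).1.
have dinc i : (d i < d i.+1)%N by exact: (hnxt _).2.
pose Nf k := (\sum_(j < k.+1) B j)%N.
have hB k : (B k <= Nf k)%N by rewrite /Nf big_ord_recr /= leq_addl.
have hN k : (Nf k <= Nf k.+1)%N by rewrite /Nf [in X in (_ <= X)%N]big_ord_recr /= leq_addr.
pose g i := (d i, Nf i).
have dge i : (i <= d i)%N by apply: (inc_ge (f := d)).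
have near k (s : pair2) i j : pmin s = dd g i -> pmax s = dd g j -> cond g k i j ->
    dX eta (y s) < eps k / 2.
  move=> h1 h2 hc; apply: hyp.
  - by rewrite h1; apply: dD.
  - by rewrite h2; apply: dD.
  - move: hc; rewrite /cond /NN /= h1 h2 /dd /=; case: mode => hc.
      by apply: leq_trans (hB k) (leq_trans hc (dge i)).
    by apply: leq_trans (hB k) (leq_trans hc (dge j)).
have Pg : Pw g.
  split => //.
  move=> k s t i j i' j' h1 h2 h3 h4 c1 c2.
  have := near k s i j h1 h2 c1; have := near k t i' j' h3 h4 c2.
  have := mc_tri hX (y s) eta (y t); rewrite (mc_sym hX (y s) eta); have := eps_pos k; lra.
exists (exist _ g Pg); apply: esym; apply: (eq_small hX) => r r0.
have r2 : 0 < r / 2 by lra.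
have [k hk] := eps_small r2.
have [a1 a2] := uu_pair (exist _ g Pg) k.
have n1 := near k _ _ _ a1 a2 (cond_uu (exist _ g Pg) (leqnn k)).
have := fW_spec (exist _ g Pg) k; have := eps_pos k.
have := mc_tri hX eta (uu (exist _ g Pg) k) (fW (exist _ g Pg)); rewrite /uu; lra.
Qed.

Lemma Lr_img (hm : mode = true) : Lambda_r y `<=` fW @` setT.
Proof.
move=> eta [D [iD hconv]].
have /choice [Kf hK] : forall k, exists K, finite_set K /\
    forall s, sq2 (D `\` K) s -> dX eta (y s) < eps k / 2.
  move=> k; have e2 : 0 < eps k / 2 by have := eps_pos k; lra.
  have [K [fK hK]] := hconv _ (nbhs_ball hX eta e2).
  by exists K; split => // s /hK.
have /choice [B hB] : forall k, exists b, forall n, Kf k n -> (n < b)%N.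
  by move=> k; apply: fin_bound; exact: (hK k).1.
suff [w hw] : exists w : W, fW w = eta by exists w.
apply: (build (B := B) iD).
move=> k s hs1 hs2; rewrite hm => hb; apply: (hK k).2; split; split => //.
  by move=> /(hB k); rewrite ltnNge hb.
move=> /(hB k); rewrite ltnNge => /negP; apply.
exact: leq_trans hb (ltnW (pP s)).
Qed.

Lemma LR_img (hm : mode = false) : Lambda_R y `<=` fW @` setT.
Proof.
move=> eta [E [hE hconv]].
have [D [iD sDE]] : exists D, infinite_set D /\ sq2 D `<=` E.
  apply: contrapT => h; apply: hE => D iD sD; apply: h; by exists D.
have /choice [B hB] : forall k, exists b, forall s, E s -> ~ (dX eta (y s) < eps k / 2) ->
    (pmax s < b)%N.
  move=> k; have e2 : 0 < eps k / 2 by have := eps_pos k; lra.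
  have fF := hconv _ (nbhs_ball hX eta e2).
  have [b hb] := fin_bound (finite_image pmax fF).
  by exists b => s Es hn; apply: hb; exists s.
suff [w hw] : exists w : W, fW w = eta by exists w.
apply: (build (B := B) iD).
move=> k s hs1 hs2; rewrite hm => hb; apply: contrapT => hn.
by have := hB k s (sDE s (conj hs1 hs2)) hn; rewrite ltnNge hb.
Qed.

End PartA.

Lemma analytic_r (X : topologicalType) (dX : X -> X -> R) (hX : metric_compatible dX)
  (cX : metric_complete dX) (y : pair2 -> X) : analytic (Lambda_r y).
Proof.
exists (MW dX y true); split.
  split; first exact: MW_separable.
  by exists (rhoW (mode := true)); split; [exact: rhoW_metric | exact: rhoW_complete].
exists (@fW X dX hX cX y true); split; first exact: fW_cont.
by apply/seteqP; split; [exact: img_r | exact: Lr_img].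
Qed.

Lemma analytic_R (X : topologicalType) (dX : X -> X -> R) (hX : metric_compatible dX)
  (cX : metric_complete dX) (y : pair2 -> X) : analytic (Lambda_R y).
Proof.
exists (MW dX y false); split.
  split; first exact: MW_separable.
  by exists (rhoW (mode := false)); split; [exact: rhoW_metric | exact: rhoW_complete].
exists (@fW X dX hX cX y false); split; first exact: fW_cont.
by apply/seteqP; split; [exact: img_R | exact: LR_img].
Qed.

Definition rho0 (x y : void) : R := 0.

Lemma analytic0 (X : topologicalType) : analytic (@set0 X).
Proof.
exists (mt rho0); split.
  split.
    exists set0; split; first exact: countable0.
    by rewrite closure0; apply/seteqP; split => // x; case: x.
  exists rho0; split.
    by apply: mt_metric => -[].
  by move=> u _; case: (u 0%N).
exists (fun x : mt rho0 => match x with end); split.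
  by move=> x; case: x.
by apply/seteqP; split => x // [[]].
Qed.

Lemma partB (X : topologicalType) (dX : X -> X -> R) (hX : metric_compatible dX)
  (C : set X) : analytic C -> C !=set0 ->
  exists y : pair2 -> X, C = Lambda_r y /\ C = Lambda_R y.
Proof.
move=> [Y [[[Ds [cD clD]] [rho [hY cY]]] [f [fc fC]]]] [c Cc].
rewrite -fC in Cc *; case: Cc => z0 _ fz0.
have /countable_injP [gi hinj] := cD.
have : closure Ds z0 by rewrite clD.
move=> /(_ setT (@filterT _ _ _)) [x0 [Dx0 _]].
pose e n := match pselect (exists x, Ds x /\ gi x = n) with
  | left H => projT1 (cid H) | right _ => x0 end.
have edense : forall z r, 0 < r -> exists n, rho z (e n) < r.
  move=> z r r0; have : closure Ds z by rewrite clD.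
  move=> /(_ _ (nbhs_ball hY z r0)) [x [Dx hx]]; exists (gi x).
  rewrite /e; case: pselect => [H|nH]; last by exfalso; apply: nH; exists x.
  case: (cid H) => x' [Dx' hx'] /=.
  by have -> : x' = x by apply: hinj; [exact: mem_set | exact: mem_set | exact: hx'].
have bC : exists z, f z = f z0 by exists z0.
exists (yB rho f e (f z0)); split; apply/seteqP; split.
- move=> t /(C_sub_LR hX hY (f z0) fc edense); exact: LR_sub_Lr.
- exact: (Lr_sub_C hX hY cY fc bC).
- exact: (C_sub_LR hX hY (f z0) fc edense).
- move=> t /LR_sub_Lr; exact: (Lr_sub_C hX hY cY fc bC).
Qed.

Unset Implicit Arguments.

Theorem theorem4p2 (X : topologicalType) :
  polish X -> ~ countable (@setT X) ->
  (@L_r X = @Sigma11 X /\ @L_R X = @Sigma11 X) /\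
  (forall C : set X, analytic C -> C !=set0 ->
     exists y : pair2 -> X, C = Lambda_r y /\ C = Lambda_R y).
Proof.
move=> [_ [d [hX cX]]] _.
have ne : forall A : set X, A <> set0 -> A !=set0.
  move=> A nA; apply: contrapT => h; apply: nA; apply/seteqP; split => x // Ax.
  by apply: h; exists x.
split; last exact: partB hX.
split; apply/seteqP; split.
- move=> A [[y ->]|->]; [exact: analytic_r hX cX y | exact: analytic0].
- move=> A hA; case: (pselect (A = set0)) => [->|nA]; first by right.
  by left; have [y [h1 _]] := partB hX hA (ne _ nA); exists y.
- move=> A [[y ->]|->]; [exact: analytic_R hX cX y | exact: analytic0].
- move=> A hA; case: (pselect (A = set0)) => [->|nA]; first by right.
  by left; have [y [_ h2]] := partB hX hA (ne _ nA); exists y.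
Qed.
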